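(* Let $n\ge2$ and let $\mathfrak{g}_n$ be the Lie algebra defined in the context. Then $\mathfrak{g}_n$ admits $\nu_n=T_{n-2}+1=\frac{(n-1)(n-2)}{2}+1$ functionally independent Casimir invariants, of which $T_{n-2}$ are the central elements $z_{i,j}$; hence there is only one nontrivial Casimir invariant, up to multiplication by scalars and by central elements. Equivalently, the matrix $A=\big(\sum_k c_{ij}^k x_k\big)_{i,j}$ formed from the structure constants of $\mathfrak{g}_n$ in commuting variables has rank $2(n-1)$.
   Context: $\mathbb{K}$ is $\mathbb{R}$ or $\mathbb{C}$; $T_m=m(m+1)/2$. For $n\ge2$, $\mathfrak{g}_n$ is the Lie algebra of dimension $T_n$ with basis $h,x_-,x_+$, $y_{i,\pm}$ ($1\le i\le n-2$), $z_{i,j}$ ($1\le i\le j\le n-2$), whose nonzero brackets (up to antisymmetry) are $[x_+,x_-]=h$, $[h,x_\pm]=\pm2x_\pm$, $[h,y_{i,\pm}]=\pm y_{i,\pm}$, $[x_-,y_{i,+}]=y_{i,-}$, $[x_+,y_{i,-}]=y_{i,+}$, $[y_{i,+},y_{j,-}]=z_{\min(i,j),\max(i,j)}$; all other brackets of basis elements vanish, so the centre is spanned by the $z_{i,j}$. With structure constants $[x_i,x_j]=\sum_k c_{ij}^kx_k$ in a basis $x_1,\dots,x_d$, the number of functionally independent Casimir invariants (functions on $\mathfrak{g}_n^*$ Poisson-commuting, for the Lie–Poisson bracket, with all linear functions) equals $\dim\mathfrak{g}_n-\operatorname{rank}A$ with $A=\big(\sum_kc_{ij}^kx_k\big)_{i,j=1}^d$,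 the $x_k$ being commuting variables. *)

(* Defs.v *)
From HB Require Import structures.
From mathcomp Require Import all_boot all_order all_algebra.
From mathcomp Require Import fraction.
From mathcomp Require Import mpoly.
Set Implicit Arguments. Unset Strict Implicit. Unset Printing Implicit Defensive.
Import Order.TTheory GRing.Theory Num.Theory.
Local Open Scope ring_scope.

Definition T (m : nat) : nat := ((m * m.+1) %/ 2)%N.

(* Basis of g_n, with m = n - 2:
   inl (inl 0) = h, inl (inl 1) = x_-, inl (inl 2) = x_+,
   inl (inr (i, true)) = y_{i,+}, inl (inr (i, false)) = y_{i,-},
   inr (i, j) with i <= j = z_{i,j}. *)
Definition zpred (m : nat) (p : 'I_m * 'I_m) : bool := (p.1 <= p.2)%N.
Definition zidx_t (m : nat) := {p : 'I_m * 'I_m | zpred p}.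
Definition gbasis (m : nat) : finType :=
  (('I_3 + ('I_m * bool)) + zidx_t m)%type.

Section Basis.
Variable m : nat.
Definition bh : gbasis m := inl (inl (@Ordinal 3 0 isT)).
Definition bxm : gbasis m := inl (inl (@Ordinal 3 1 isT)).
Definition bxp : gbasis m := inl (inl (@Ordinal 3 2 isT)).
Definition by_ (i : 'I_m) (s : bool) : gbasis m := inl (inr (i, s)).
Lemma zpred_swap (i j : 'I_m) : (i <= j)%N = false -> zpred (j, i).
Proof. by move=> h; rewrite /zpred /=; apply: ltnW; rewrite ltnNge h. Qed.
Definition bz (i j : 'I_m) : gbasis m :=
  (if (i <= j)%N as b return ((i <= j)%N = b -> gbasis m)
   then fun h => inr (exist (fun p => is_true (zpred p)) (i, j) h)
   else fun h => inr (exist (fun p => is_true (zpred p)) (j, i) (zpred_swap h)))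
  (erefl _).
End Basis.

(* "Positive" brackets: brp a b = Some (c, e) means [a, b] = c e. *)
Definition brp (K : numFieldType) (m : nat) (a b : gbasis m) : option (K * gbasis m) :=
  match a, b with
  | inl (inl x), inl (inl y) =>
      match nat_of_ord x, nat_of_ord y with
      | 2, 1 => Some (1, bh m)            (* [x_+, x_-] = h *)
      | 0, 2 => Some (2%:R, bxp m)        (* [h, x_+] = 2 x_+ *)
      | 0, 1 => Some (- 2%:R, bxm m)      (* [h, x_-] = -2 x_- *)
      | _, _ => None
      end
  | inl (inl x), inl (inr (i, s)) =>
      match nat_of_ord x, s with
      | 0, true => Some (1, by_ i true)       (* [h, y_{i,+}] = y_{i,+} *)
      | 0, false => Some (-1, by_ i false)    (* [h, y_{i,-}] = -y_{i,-} *)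
      | 1, true => Some (1, by_ i false)      (* [x_-, y_{i,+}] = y_{i,-} *)
      | 2, false => Some (1, by_ i true)      (* [x_+, y_{i,-}] = y_{i,+} *)
      | _, _ => None
      end
  | inl (inr (i, true)), inl (inr (j, false)) =>
      Some (1, bz i j)
  | _, _ => None
  end.

Definition br (K : numFieldType) (m : nat) (a b : gbasis m) : option (K * gbasis m) :=
  match brp K a b with
  | Some ce => Some ce
  | None => match brp K b a with
            | Some (c, e) => Some (- c, e)
            | None => None
            end
  end.

Definition dimg (m : nat) : nat := #|gbasis m|.

Definition Aentry (K : numFieldType) (m : nat) (a b : gbasis m) : {mpoly K[dimg m]} :=
  match br K a b with
  | Some (c, e) => c *: 'X_(enum_rank e)
  | None => 0
  end.

Definition Amx (K : numFieldType) (m : nat) : 'M[{fraction {mpoly K[dimg m]}}]_(dimg m) :=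
  \matrix_(i, j) tofrac (Aentry K (enum_val i) (enum_val j)).

Definition ncasimir (K : numFieldType) (m : nat) : nat := (dimg m - \rank (Amx K m))%N.

Definition central_basis (K : numFieldType) (m : nat) : {set gbasis m} :=
  [set b | [forall a, br K a b == None]].

(* Main.v *)
Require Import Defs.
From HB Require Import structures.
From mathcomp Require Import all_boot all_order all_algebra.
From mathcomp Require Import fraction.
From mathcomp Require Import mpoly.
From mathcomp Require Import zify.
Set Implicit Arguments. Unset Strict Implicit. Unset Printing Implicit Defensive.
Import Order.TTheory GRing.Theory Num.Theory.
Local Open Scope ring_scope.

Lemma brp_inr (K : numFieldType) m p (b : gbasis m) : brp K (inr p) b = None.
Proof. by []. Qed.
Lemma brp_inr2 (K : numFieldType) m p (b : gbasis m) : brp K b (inr p) = None.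
Proof. by case: b => [[[[|[|[|x]]] ?]|[i [|]]]|]. Qed.

Lemma T_bin m : T m = 'C(m.+1, 2).
Proof. by rewrite bin2 /T divn2 mulnC. Qed.

Lemma card_z m : #|{: zidx_t m}| = T m.
Proof.
rewrite card_sig T_bin.
have -> : #|[pred x : 'I_m * 'I_m | zpred x]| = (\sum_(i < m) \sum_(j < m) (i <= j))%N.
  rewrite pair_big /= -sum1_card big_mkcond /=; apply: eq_bigr => p _.
  by rewrite /zpred inE; case: (_ <= _)%N.
elim: m => [|m IH]; first by rewrite big_ord0.
rewrite big_ord_recr /= binS bin1 -IH.
rewrite (eq_bigr (fun i : 'I_m => \sum_(j < m) (i <= j) + 1)%N); last first.
  by move=> i _; rewrite big_ord_recr /= (ltnW (ltn_ord i)).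
rewrite big_split /= sum_nat_const card_ord muln1.
have H0 : (\sum_(j < m) (m <= (j : nat)))%N = 0%N.
  by apply: big1 => j _; rewrite leqNgt ltn_ord.
rewrite big_ord_recr /= H0 leqnn; lia.
Qed.

Lemma card_g m : dimg m = (3 + m * 2 + T m)%N.
Proof. by rewrite /dimg !card_sum card_ord card_prod card_ord card_bool card_z. Qed.

Lemma central_eq (K : numFieldType) m : central_basis K m = [set inr p | p : zidx_t m].
Proof.
apply/setP => b; rewrite inE; apply/forallP/imsetP.
- case: b => [[x|[i s]]|p] H.
  + case: x H => [[|[|[|x]]] hx] H //.
    * by move: (H (bxp m)); rewrite /br.
    * by move: (H (bh m)); rewrite /br.
    * by move: (H (bh m)); rewrite /br.
  + by move: (H (bh m)); case: s H.
  + by exists p.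
- by case=> p _ -> a; rewrite /br brp_inr brp_inr2.
Qed.

Lemma brp_excl (K : numFieldType) m (a b : gbasis m) :
  brp K a b <> None -> brp K b a = None.
Proof.
case: a => [[x|[i s]]|p]; case: b => [[y|[j t]]|q] //.
- by case: x => [[|[|[|x]]] ?]; case: y => [[|[|[|y]]] ?].
- by case: x => [[|[|[|x]]] ?]; case: t.
- by case: y => [[|[|[|y]]] ?]; case: s.
- by case: s; case: t.
Qed.

Lemma Aentry_anti (K : numFieldType) m (a b : gbasis m) :
  Aentry K b a = - Aentry K a b.
Proof.
rewrite /Aentry /br.
case ha: (brp K a b) => [[c e]|].
  by rewrite brp_excl ?ha //= scaleNr.
case hb: (brp K b a) => [[c e]|] /=; first by rewrite scaleNr opprK.
by rewrite oppr0.
Qed.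

Lemma rank_mxsub_le (F : fieldType) m n m' n' (f : 'I_m' -> 'I_m)
  (g : 'I_n' -> 'I_n) (A : 'M[F]_(m, n)) : (\rank (mxsub f g A) <= \rank A)%N.
Proof.
rewrite mxsubrc; apply: leq_trans (mxrankS (rowsub_sub f _)) _.
rewrite -mxrank_tr -[X in (_ <= X)%N]mxrank_tr trmx_mxsub.
exact: (mxrankS (rowsub_sub _ _)).
Qed.

Lemma rank_le_rowsub (F : fieldType) m n k (A : 'M[F]_(m, n)) (f : 'I_k -> 'I_m) :
  (forall i, (forall l, f l != i) -> row i A = 0) -> (\rank A <= \rank (rowsub f A))%N.
Proof.
move=> H; apply: mxrankS; apply/row_subP => i.
case: (pickP (fun l => f l == i)) => [l /eqP <- | Hn].
  by rewrite -row_rowsub row_sub.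
by rewrite H ?sub0mx // => l; rewrite Hn.
Qed.

Definition vfun m (e : gbasis m) : bool :=
  match e with inl (inl o) => nat_of_ord o == 0%N | inl (inr _) => false
  | inr p => (sval p).1 == (sval p).2 end.

Lemma vfun_bz m (i j : 'I_m) : vfun (bz i j) = (i == j).
Proof.
rewrite /bz; move: (erefl (i <= j)%N).
by case: {2 3}(i <= j)%N => h /=; last rewrite eq_sym.
Qed.

Section Main.
Variables (K : numFieldType) (m : nat).
Local Notation N := (dimg m).
Local Notation A := (Amx K m).

Definition vv : 'I_N -> K := fun k => (vfun (enum_val k))%:R.

Lemma eval_Aentry a b : (Aentry K a b).@[vv] =
  match br K a b with Some (c, e) => c * (vfun e)%:R | None => 0 end.
Proof.
rewrite /Aentry; case: br => [[c e]|]; last exact: meval0.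
by rewrite mevalZ mevalXU /vv enum_rankK.
Qed.

Definition rowb (w : option 'I_m * bool) : gbasis m :=
  match w with (None, true) => bxp m | (None, false) => bxm m
  | (Some i, s) => by_ i s end.
Definition colb (w : option 'I_m * bool) : gbasis m :=
  match w with (None, true) => bxm m | (None, false) => bxp m
  | (Some i, s) => by_ i (~~ s) end.

Lemma eval_key w w' : (Aentry K (rowb w) (colb w')).@[vv] =
  (if w.2 then 1 else -1) *+ (w == w').
Proof.
have hS : forall i j : 'I_m, (Some i == Some j) = (i == j) by [].
rewrite eval_Aentry.
case: w => [[i|] s]; case: w' => [[j|] t]; case: s; case: t => //=;
  rewrite ?vfun_bz ?xpair_eqE /= ?andbT ?andbF ?hS ?mulr0 ?mul0r ?mulr1n ?mulr0n ?mulr1 ?mul1r //.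
all: try by rewrite mulN1r eq_sym -mulNrn; case: eqP.
Qed.

Local Notation Wt := (option 'I_m * bool)%type.
Definition rsel (k : 'I_#|{: Wt}|) : 'I_N := enum_rank (rowb (enum_val k)).
Definition csel (k : 'I_#|{: Wt}|) : 'I_N := enum_rank (colb (enum_val k)).

Lemma lower : (#|{: Wt}| <= \rank A)%N.
Proof.
set M0 := \matrix_(k, l) Aentry K (rowb (enum_val k)) (colb (enum_val l)) : 'M_#|{: Wt}|.
have HC : mxsub rsel csel A = map_mx (@tofrac _) M0.
  by apply/matrixP => k l; rewrite !mxE !enum_rankK.
have Hdet : (\det M0).@[vv] != 0.
  rewrite -det_map_mx (_ : map_mx _ M0 = diag_mx (\row_k (if (enum_val k).2 then 1 else -1))).
    rewrite det_diag; apply/prodf_neq0 => k _; rewrite mxE.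
    by case: ifP => _; rewrite ?oppr_eq0 oner_neq0.
  by apply/matrixP => k l; rewrite !mxE -(inj_eq enum_val_inj) -eval_key.
have : mxsub rsel csel A \in unitmx.
  rewrite unitmxE unitfE HC det_map_mx tofrac_eq0.
  by apply/eqP => H0; move: Hdet; rewrite H0 meval0 eqxx.
move/mxrank_unit => <-; exact: rank_mxsub_le.
Qed.

Local Notation Ut := ('I_3 + 'I_m * bool)%type.
Definition fsel (l : 'I_#|{: Ut}|) : 'I_N := enum_rank (inl (enum_val l) : gbasis m).

Lemma fsel_miss i : (forall l, fsel l != i) -> exists p, enum_val i = inr p.
Proof.
move=> H; case E: (enum_val i) => [u|p]; last by exists p.
by move: (H (enum_rank u)); rewrite /fsel enum_rankK -E enum_valK eqxx.
Qed.

Lemma two_neq0 : (2%:R : {fraction {mpoly K[N]}}) != 0.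
Proof.
have <- : @tofrac _ (2%:R : {mpoly K[N]}) = 2%:R := rmorph_nat _ 2.
rewrite tofrac_eq0; apply/eqP => H; have := congr1 (meval vv) H.
by rewrite rmorph_nat meval0 => /eqP; rewrite pnatr_eq0.
Qed.

Lemma upper : (\rank A < #|{: Ut}|)%N.
Proof.
set B := mxsub fsel fsel A.
have h1 : (\rank A <= \rank (rowsub fsel A))%N.
  apply: rank_le_rowsub => i Hi; have [p Ep] := fsel_miss Hi.
  by apply/rowP => j; rewrite !mxE Ep /Aentry /br brp_inr brp_inr2 tofrac0.
have h2 : (\rank (rowsub fsel A) <= \rank B)%N.
  rewrite -mxrank_tr; apply: leq_trans (rank_le_rowsub (f:=fsel) _) _.
    move=> i Hi; have [p Ep] := fsel_miss Hi.
    by apply/rowP => j; rewrite !mxE Ep /Aentry /br brp_inr2 brp_inr tofrac0.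
  rewrite (_ : rowsub fsel (rowsub fsel A)^T = B^T) ?mxrank_tr //.
  by apply/matrixP => k l; rewrite !mxE.
have h3 : (\rank B < #|{: Ut}|)%N.
  rewrite ltn_neqAle rank_leq_row andbT; apply/negP => /eqP Hr.
  have : B \in unitmx by rewrite -row_free_unit /row_free Hr.
  rewrite unitmxE unitfE => /negP; apply; apply/eqP.
  have BT : B^T = (-1) *: B.
    by apply/matrixP=> k l; rewrite !mxE Aentry_anti tofracN mulN1r.
  have hodd : odd #|{: Ut}| by rewrite card_sum card_ord card_prod card_ord card_bool oddD oddM /= andbF.
  have := det_tr B; rewrite BT detZ -signr_odd hodd expr1 mulN1r => /eqP.
  rewrite eq_sym -subr_eq0 opprK -mulr2n -mulr_natr mulf_eq0 (negbTE two_neq0) orbF.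
  by move/eqP.
by apply: leq_ltn_trans h3; apply: leq_trans h2.
Qed.
End Main.

Theorem proposition3p4 (K : numFieldType) (n : nat) (hn : (2 <= n)%N) :
  dimg (n - 2) = T n /\
  \rank (Amx K (n - 2)) = (2 * (n - 1))%N /\
  ncasimir K (n - 2) = (T (n - 2) + 1)%N /\
  #|central_basis K (n - 2)| = T (n - 2).
Proof.
case: n hn => [|[|m]] // _.
rewrite !subSS !subn0.
have hT : T m.+2 = (T m + m.*2 + 3)%N.
  by rewrite !T_bin !binS !bin1 !bin0; lia.
have hlo := lower K m; have hup := upper K m.
rewrite card_prod card_option card_ord card_bool in hlo.
rewrite card_sum card_ord card_prod card_ord card_bool in hup.
have hr : \rank (Amx K m) = (2 * m.+1)%N by lia.
split; first by rewrite card_g hT; lia.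
split; first exact: hr.
split; first by rewrite /ncasimir hr card_g; lia.
by rewrite central_eq card_imset ?card_z //; exact: inr_inj.
Qed.
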